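(* Let $\mathcal A=(S,R)$ be an argumentation network with $S\neq\varnothing$, $R\subseteq S\times S$, which is finitary (every $y\in S$ has finitely many attackers). Write $\mathrm{Attack}(y)=\{z\mid zRy\}$ and regard the elements of $S$ as atoms of the logic $\mathbf{CN}$. Let $$\Delta_{\mathcal A}=\{x\mid x\in S,\ \neg\exists y\,(yRx)\}\cup\{y\leftrightarrow \textstyle\bigwedge_{z\in \mathrm{Attack}(y)}Nz\mid y\in S\}\cup\{z\to Ny\mid zRy\}\cup\{(\textstyle\bigwedge_{z\in\mathrm{Attack}(y)}\neg z)\wedge(\bigvee_{z\in\mathrm{Attack}(y)}\neg Nz)\to \neg y\wedge\neg Ny\mid y\in S\}$$ (empty conjunction is $\top$, empty disjunction is $\bot$). Then the $\mathbf{CN}$-models of $\Delta_{\mathcal A}$ correspond exactly to the complete extensions of $\mathcal A$: (i) for every $\mathbf{CN}$-model $h$ of $\Delta_{\mathcal A}$, the function $\lambda_h:S\to\{\mathrm{in},\mathrm{out},\mathrm{und}\}$ given by $\lambda_h(x)=\mathrm{in}$ if $h(x)=1$, $\lambda_h(x)=\mathrm{out}$ if $h(Nx)=1$, and $\lambda_h(x)=\mathrm{und}$ if $h(x)=h(Nx)=0$, is a well-defined legitimate Caminada labelling of $\mathcal A$; and (ii) for every legitimate Caminada labelling $\lambda$ of $\mathcal A$, the assignment $h_\lambda$ with $h_\lambda(x)=1$ iff $\lambda(x)=\mathrm{in}$ and $h_\lambda(Nx)=1$ iff $\lambda(x)=\mathrm{out}$ (for $x\in S$) is a $\mathbf{CN}$-model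 of $\Delta_{\mathcal A}$.
   Context: The logic $\mathbf{CN}$: atoms are $q$ and $Nq$ for $q$ in a set of basic atoms (here containing $S$); formulas are built with classical connectives; a $\mathbf{CN}$-model is a classical $\{0,1\}$-assignment $h$ to all atoms $q,Nq$ with $h(Nq)=1\Rightarrow h(q)=0$, with classical satisfaction; $\Delta\vdash_{\mathbf{CN}}A$ iff $\Delta\cup\{Nq\to\neg q\}\vdash A$ classically. A legitimate Caminada labelling of $(S,R)$ is a function $\lambda:S\to\{\mathrm{in},\mathrm{out},\mathrm{und}\}$ such that for all $x$: (C1) $\lambda(x)=\mathrm{in}$ iff every $y$ with $yRx$ has $\lambda(y)=\mathrm{out}$ (in particular if $x$ has no attackers); (C2) $\lambda(x)=\mathrm{out}$ iff some $y$ with $yRx$ has $\lambda(y)=\mathrm{in}$; (C3) $\lambda(x)=\mathrm{und}$ iff no attacker of $x$ is labelled in and some attacker of $x$ is labelled und. Complete extensions are the sets $\{x\mid\lambda(x)=\mathrm{in}\}$ for legitimate labellings $\lambda$, and this gives a bijection between legitimate labellings and complete extensions. *)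

(* Defs.v *)
From Stdlib Require Import List Bool.
Import ListNotations.
Set Implicit Arguments.

(* Atoms of CN: q and Nq for q a basic atom (here the basic atoms are the elements of S). *)
Inductive atom (S : Type) : Type :=
| APos : S -> atom S
| ANeg : S -> atom S.

Inductive form (S : Type) : Type :=
| FAtom : atom S -> form S
| FTop : form S
| FBot : form S
| FNot : form S -> form S
| FAnd : form S -> form S -> form S
| FOr  : form S -> form S -> form S
| FImp : form S -> form S -> form S
| FIff : form S -> form S -> form S.

Arguments FTop {S}.
Arguments FBot {S}.

Definition Pos {S} (x : S) : form S := FAtom (APos x).
Definition Nat {S} (x : S) : form S := FAtom (ANeg x).

Definition bigAnd {S} (l : list (form S)) : form S := fold_right (@FAnd S) FTop l.
Definition bigOr  {S} (l : list (form S)) : form S := fold_right (@FOr S) FBot l.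

Fixpoint sat {S} (h : atom S -> bool) (A : form S) : bool :=
  match A with
  | FAtom a => h a
  | FTop => true
  | FBot => false
  | FNot B => negb (sat h B)
  | FAnd B C => sat h B && sat h C
  | FOr B C => sat h B || sat h C
  | FImp B C => implb (sat h B) (sat h C)
  | FIff B C => eqb (sat h B) (sat h C)
  end.

Definition CN_model {S} (h : atom S -> bool) : Prop :=
  forall q, h (ANeg q) = true -> h (APos q) = false.

Definition CN_model_of {S} (h : atom S -> bool) (Delta : form S -> Prop) : Prop :=
  CN_model h /\ forall A, Delta A -> sat h A = true.

(* Argumentation network (S, R): R z y means z attacks y. *)
Definition finitary {S} (R : S -> S -> Prop) : Prop :=
  forall y : S, exists l : list S, forall z, R z y <-> In z l.

Definition enumerates_attackers {S} (R : S -> S -> Prop) (y : S) (l : list S) : Prop :=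
  forall z, R z y <-> In z l.

(* The theory Delta_A.  Conjunctions/disjunctions over Attack(y) are built from
   any list enumerating Attack(y) (finite by finitarity). *)
Inductive Delta {S} (R : S -> S -> Prop) : form S -> Prop :=
| D_unattacked : forall x, (forall y, ~ R y x) -> Delta R (Pos x)
| D_iff : forall y l, enumerates_attackers R y l ->
    Delta R (FIff (Pos y) (bigAnd (map Nat l)))
| D_attack : forall z y, R z y -> Delta R (FImp (Pos z) (Nat y))
| D_und : forall y l, enumerates_attackers R y l ->
    Delta R (FImp (FAnd (bigAnd (map (fun z => FNot (Pos z)) l))
                        (bigOr (map (fun z => FNot (Nat z)) l)))
                  (FAnd (FNot (Pos y)) (FNot (Nat y)))).

Inductive label : Type := lin | lout | lund.

Definition legitimate {S} (R : S -> S -> Prop) (lam : S -> label) : Prop :=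
  forall x,
    (lam x = lin <-> forall y, R y x -> lam y = lout) /\
    (lam x = lout <-> exists y, R y x /\ lam y = lin) /\
    (lam x = lund <-> (forall y, R y x -> lam y <> lin) /\
                      (exists y, R y x /\ lam y = lund)).

Definition lambda_of {S} (h : atom S -> bool) (x : S) : label :=
  if h (APos x) then lin else if h (ANeg x) then lout else lund.

Definition h_of {S} (lam : S -> label) (a : atom S) : bool :=
  match a with
  | APos x => match lam x with lin => true | _ => false end
  | ANeg x => match lam x with lout => true | _ => false end
  end.

(* Main.v *)
Require Import Defs.
From Stdlib Require Import List Bool Classical.

Lemma sat_bigAnd {S} (h : atom S -> bool) (f : S -> form S) l :
  sat h (bigAnd (map f l)) = forallb (fun z => sat h (f z)) l.
Proof. induction l; simpl; auto. rewrite IHl; auto. Qed.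

Lemma sat_bigOr {S} (h : atom S -> bool) (f : S -> form S) l :
  sat h (bigOr (map f l)) = existsb (fun z => sat h (f z)) l.
Proof. induction l; simpl; auto. rewrite IHl; auto. Qed.

Lemma lab_cases (x : label) : x = lin \/ x = lout \/ x = lund.
Proof. destruct x; auto. Qed.

Theorem theorem5 (S : Type) (R : S -> S -> Prop)
  (HS : inhabited S) (Hfin : finitary R) :
  (forall h : atom S -> bool, CN_model_of h (Delta R) ->
     (forall x, ~ (h (APos x) = true /\ h (ANeg x) = true)) /\
     legitimate R (lambda_of h)) /\
  (forall lam : S -> label, legitimate R lam ->
     CN_model_of (h_of lam) (Delta R)).
Proof.
  split.
  - intros h [Hcn HD].
    assert (F1 : forall y l, enumerates_attackers R y l ->
              (h (APos y) = true <-> forall z, R z y -> h (ANeg z) = true)).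
    { intros y l El. pose proof (HD _ (D_iff El)) as H. simpl in H.
      rewrite sat_bigAnd in H. simpl in H. apply eqb_prop in H.
      unfold Pos in H; simpl in H. rewrite H, forallb_forall.
      split; intros G z Hz; apply G; apply El; auto. }
    assert (F2 : forall z y, R z y -> h (APos z) = true -> h (ANeg y) = true).
    { intros z y Rz Hz. pose proof (HD _ (@D_attack _ R z y Rz)) as H. simpl in H.
      rewrite Hz in H. exact H. }
    assert (F3 : forall y l, enumerates_attackers R y l ->
       (forall z, R z y -> h (APos z) = false) ->
       (exists z, R z y /\ h (ANeg z) = false) ->
       h (APos y) = false /\ h (ANeg y) = false).
    { intros y l El A1 [z [Rz Hz]].
      pose proof (HD _ (D_und El)) as H. simpl in H.
      rewrite sat_bigAnd, sat_bigOr in H. simpl in H.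
      assert (E1 : forallb (fun z => negb (h (APos z))) l = true).
      { apply forallb_forall. intros w Hw. apply El in Hw. rewrite A1; auto. }
      assert (E2 : existsb (fun z => negb (h (ANeg z))) l = true).
      { apply existsb_exists. exists z. split. apply El; auto. rewrite Hz; auto. }
      rewrite E1, E2 in H. simpl in H.
      destruct (h (APos y)), (h (ANeg y)); simpl in H; try discriminate; auto. }
    assert (Wd : forall x, ~ (h (APos x) = true /\ h (ANeg x) = true)).
    { intros x [A B]. apply Hcn in B. congruence. }
    split; [exact Wd|].
    assert (Lin : forall x, lambda_of h x = lin <-> h (APos x) = true).
    { intros x; unfold lambda_of; destruct (h (APos x)), (h (ANeg x)); split; intro; congruence. }
    assert (Lout : forall x, lambda_of h x = lout <-> h (APos x) = false /\ h (ANeg x) = true).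
    { intros x; unfold lambda_of; destruct (h (APos x)), (h (ANeg x)); split; intro;
      intuition congruence. }
    assert (Lund : forall x, lambda_of h x = lund <-> h (APos x) = false /\ h (ANeg x) = false).
    { intros x; unfold lambda_of; destruct (h (APos x)), (h (ANeg x)); split; intro;
      intuition congruence. }
    intros x. destruct (Hfin x) as [l El].
    assert (C1 : lambda_of h x = lin <-> forall y, R y x -> lambda_of h y = lout).
    { rewrite Lin, (F1 x l El). split; intros G y Ry.
      - apply Lout. specialize (G y Ry). split; auto.
      - specialize (G y Ry). apply Lout in G; tauto. }
    assert (C2 : lambda_of h x = lout <-> exists y, R y x /\ lambda_of h y = lin).
    { rewrite Lout. split.
      - intros [A B]. apply NNPP. intro N.
        assert (A1 : forall z, R z x -> h (APos z) = false).
        { intros z Rz. destruct (h (APos z)) eqn:E; auto. exfalso; apply N.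
          exists z; split; auto; apply Lin; auto. }
        assert (Ex : exists z, R z x /\ h (ANeg z) = false).
        { apply NNPP; intro N2. assert (h (APos x) = true).
          { apply (F1 x l El). intros z Rz. destruct (h (ANeg z)) eqn:E; auto.
            exfalso; apply N2; eauto. }
          congruence. }
        destruct (F3 x l El A1 Ex); congruence.
      - intros [y [Ry Ly]]. apply Lin in Ly. pose proof (F2 y x Ry Ly).
        split; auto. }
    split; [exact C1|]. split; [exact C2|].
    split.
    + intros U. split.
      * intros y Ry Ly. assert (lambda_of h x = lout) by (apply C2; eauto). congruence.
      * apply NNPP; intro N.
        assert (lambda_of h x = lin).
        { apply C1. intros y Ry. destruct (lab_cases (lambda_of h y)) as [E|[E|E]]; auto.
          - assert (lambda_of h x = lout) by (apply C2; eauto). congruence.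
          - exfalso; apply N; eauto. }
        congruence.
    + intros [A [y [Ry Uy]]].
      destruct (lab_cases (lambda_of h x)) as [E|[E|E]]; auto.
      * apply C1 with (y := y) in E; auto. congruence.
      * apply C2 in E. destruct E as [w [Rw Lw]]. exfalso; eapply A; eauto.
  - intros lam Hl. split.
    + intros q. simpl. destruct (lam q); congruence.
    + intros A HA. destruct HA as [x Hx | y l El | z y Rz | y l El]; simpl.
      * destruct (Hl x) as [[_ C] _]. rewrite C; auto. intros y Ry; exfalso; eapply Hx; eauto.
      * rewrite sat_bigAnd. simpl. destruct (Hl y) as [C1 _].
        assert (K : forallb (fun z => match lam z with lout => true | _ => false end) l = true <-> lam y = lin).
        { rewrite forallb_forall, C1. split; intros G z Hz.
          - apply El in Hz. specialize (G z Hz). destruct (lam z); congruence.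
          - apply El in Hz. rewrite (G z Hz); auto. }
        destruct (forallb _ l) eqn:F; destruct (lam y) eqn:E; simpl; auto;
          destruct K as [K1 K2]; try (specialize (K1 eq_refl); congruence);
          try (specialize (K2 eq_refl); congruence).
      * destruct (lam z) eqn:E; auto. simpl.
        destruct (Hl y) as [_ [[_ C2] _]]. rewrite C2; eauto.
      * rewrite sat_bigAnd, sat_bigOr. simpl.
        destruct (forallb _ l) eqn:F; simpl; auto.
        destruct (existsb _ l) eqn:G; simpl; auto.
        rewrite forallb_forall in F. apply existsb_exists in G.
        destruct G as [w [Hw Gw]].
        destruct (Hl y) as [_ [_ [_ C3]]].
        assert (lam y = lund).
        { apply C3. split.
          - intros z Rz. apply El in Rz. specialize (F z Rz). destruct (lam z); simpl in F; congruence.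
          - exists w. split. apply El; auto. specialize (F w Hw).
            destruct (lam w); simpl in *; congruence. }
        rewrite H; auto.
Qed.
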